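(* Let $S=\{\rho_1=0<\rho_2<\cdots\}$ be a numerical semigroup and $\rho\in S$. Then $\#A[\rho]$ is odd if and only if $\rho\in 2S$. In this case, if $\rho=2\rho_i$, then $\#A[\rho]\le 2i-1$.
   Context: A numerical semigroup is a submonoid $S$ of $(\mathbb{N}_0,+)$ with finite complement, with elements listed increasingly. For $\rho\in S$, $A[\rho]=\{p\in S:\ \rho-p\in S\}$. $2S=\{2s:\ s\in S\}$. *)

(* Defs.v *)
From mathcomp Require Import all_boot.
Set Implicit Arguments. Unset Strict Implicit. Unset Printing Implicit Defensive.

Definition numerical_semigroup (S : pred nat) : Prop :=
  [/\ S 0,
      (forall a b, S a -> S b -> S (a + b)) &
      exists N, forall n, N <= n -> S n].

(* A[rho] = { p in S : rho - p in S }.  Since rho - p must lie in S ⊆ N_0,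
   necessarily p <= rho, so A[rho] is a subset of {0,...,rho} ('I_rho.+1). *)
Definition Aset (S : pred nat) (rho : nat) : {set 'I_rho.+1} :=
  [set p : 'I_rho.+1 | S p && S (rho - p)].

Definition in_double (S : pred nat) (rho : nat) : Prop :=
  exists2 s, S s & rho = 2 * s.

(* s = rho_i, the i-th element (1-indexed) of S listed increasingly:
   s ∈ S and exactly i-1 elements of S are smaller than s. *)
Definition is_ith_elem (S : pred nat) (i s : nat) : Prop :=
  [/\ 1 <= i, S s & count S (iota 0 s) = i.-1].

(* Main.v *)
Require Import Defs.
From mathcomp Require Import all_boot.
From mathcomp Require Import zify.

Lemma card_ordP n (P : pred nat) : #|[set p : 'I_n | P (val p)]| = count P (iota 0 n).
Proof.
rewrite cardsE cardE /enum_mem size_filter -val_enum_ord count_map.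
rewrite /enum_mem (@eq_filter _ _ predT) // filter_predT.
by apply: eq_count => x; rewrite !inE.
Qed.

Lemma val_rev rho (p : 'I_rho.+1) : val (rev_ord p) = rho - p.
Proof. by rewrite /= subSS. Qed.

Lemma decomp (S : pred nat) rho :
  let A := Aset S rho in
  let L := [set p in A | 2 * p < rho] in
  let E := [set p in A | 2 * p == rho] in
  #|A| = 2 * #|L| + #|E|.
Proof.
move=> A L E.
set G := [set p in A | rho < 2 * p].
have memA : forall p, (rev_ord p \in A) = (p \in A).
  move=> p; rewrite !inE val_rev.
  have hp := ltn_ord p.
  rewrite subKn; last by lia.
  by rewrite andbC.
have GL : G = (@rev_ord rho.+1) @: L.
  apply/setP => p; apply/idP/idP.
  - rewrite inE => /andP [pA hp].
    apply/imsetP; exists (rev_ord p); last by rewrite rev_ordK.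
    rewrite inE memA pA val_rev /=.
    have := ltn_ord p; lia.
  - move/imsetP => [q]; rewrite inE => /andP [qA hq] ->.
    rewrite inE memA qA val_rev /=.
    have := ltn_ord q; lia.
have cG : #|G| = #|L| by rewrite GL card_imset //; apply: rev_ord_inj.
have AU : A = (L :|: E) :|: G.
  apply/setP => p; rewrite !inE.
  by case: (S p && _) => //=; case: (ltngtP (2 * p) rho) => _; rewrite ?orbT ?orbF ?andbT ?andbF.
have h1 := cardsUI (L :|: E) G.
have h2 := cardsUI L E.
have I1 : (L :|: E) :&: G = set0.
  apply/setP => p; rewrite !inE.
  by case: (S p && _) => //=; case: (ltngtP (2 * p) rho) => _; rewrite ?orbT ?orbF ?andbT ?andbF.
have I2 : L :&: E = set0.
  apply/setP => p; rewrite !inE.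
  by case: (S p && _) => //=; case: (ltngtP (2 * p) rho) => _; rewrite ?orbT ?orbF ?andbT ?andbF.
rewrite I1 cards0 in h1; rewrite I2 cards0 in h2.
rewrite AU; lia.
Qed.

Theorem mainTheorem11 (S : pred nat) (rho : nat) :
  numerical_semigroup S -> S rho ->
  (odd #|Aset S rho| <-> in_double S rho) /\
  (forall i s, is_ith_elem S i s -> rho = 2 * s -> #|Aset S rho| <= 2 * i - 1).
Proof.
move=> _ _.
have D := decomp S rho.
simpl in D.
set A := Aset S rho in D *.
set L := [set p in A | 2 * p < rho] in D *.
set E := [set p in A | 2 * p == rho] in D *.
have Eone : forall s, S s -> rho = 2 * s -> E = [set inord s].
  move=> s Ss hr; apply/setP => p; rewrite !inE.
  apply/idP/idP.
  - move=> /andP [_ /eqP h]; apply/eqP/val_inj; rewrite /= inordK; lia.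
  - move/eqP => ->; rewrite inordK; last by lia.
    have -> : rho - s = s by lia.
    by rewrite Ss /= hr.
split.
  rewrite D oddD oddM /=.
  split.
  - move=> oE.
    have : 0 < #|E| by case: #|E| oE.
    move/card_gt0P => [p]; rewrite !inE => /andP [/andP [Sp _] /eqP h].
    by exists p.
  - by move=> [s Ss hr]; rewrite (Eone s Ss hr) cards1.
move=> i s [i1 Ss cnt] hr.
rewrite D (Eone s Ss hr) cards1.
have : #|L| <= count S (iota 0 s).
  apply: (@leq_trans #|[set p : 'I_rho.+1 | (fun x => S x && (x < s)) (val p)]|).
    apply: subset_leq_card; apply/subsetP => p; rewrite !inE.
    move=> /andP [/andP [Sp _] h]; rewrite Sp /=; lia.
  rewrite (card_ordP rho.+1 (fun x => S x && (x < s))).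
  have -> : rho.+1 = s + (rho.+1 - s) by lia.
  rewrite iotaD count_cat add0n.
  have -> : count (fun x => S x && (x < s)) (iota 0 s) = count S (iota 0 s).
    apply: eq_in_count => x; rewrite mem_iota => hx.
    have -> : x < s by lia.
    by rewrite andbT.
  rewrite (@eq_in_count _ (fun x => S x && (x < s)) pred0 (iota s (rho.+1 - s))); first by rewrite count_pred0 addn0.
  move=> x; rewrite mem_iota => hx /=.
  have -> : x < s = false by lia.
  by rewrite andbF.
rewrite cnt; case: i i1 {cnt} => [|i] //= _; lia.
Qed.
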